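(* Let $A$ and $B$ be nontrivial commutative groups. Then $\delta(A,B)=\nu(\mathbb{Z}_{e(B)}[A])-1$ (with the convention $\infty-1=\infty$). In particular, $\delta(A,B)<\infty$ if and only if the augmentation ideal of $\mathbb{Z}_{e(B)}[A]$ is nilpotent, and $\delta(A,B)$ depends only on $A$ and $\exp(B)$.
   Context: For commutative groups $A,B$, $B^A$ denotes the commutative group (under pointwise addition) of all maps $A\to B$. For $a\in A$, the difference operator $\Delta_a:B^A\to B^A$ is $(\Delta_a f)(x)=f(x+a)-f(x)$. Let $\widetilde{\mathbb N}=\mathbb N\cup\{-\infty,\infty\}$ ($\mathbb N=\{0,1,2,\dots\}$), totally ordered with $-\infty$ least and $\infty$ greatest. The functional degree $\operatorname{fdeg}(f)\in\widetilde{\mathbb N}$ of $f\in B^A$ is: $-\infty$ if $f=0$; otherwise the least $n\in\mathbb N$ such that $\Delta_{a_1}\cdots\Delta_{a_{n+1}}f=0$ for all $a_1,\dots,a_{n+1}\in A$; and $\infty$ if no such $n$ exists. Define $\delta(A,B)=\sup\{\operatorname{fdeg}(f): f\in B^A\}$. $\mathbb{Z}_n=\mathbb{Z}/n\mathbb{Z}$ (so $\mathbb{Z}_0=\mathbb{Z}$). $\exp(B)$ is the least $n\ge1$ with $nB=0$, or $\infty$; $e(B)=\exp(B)$ if finite and $e(B)=0$ otherwise. For a commutative ring $R$ and commutative group $A$, the augmentation ideal $I$ of the group ring $R[A]$ is the kernel of $\sum r_a[a]\mapsto\sum r_a$, and $\nu(R[A])$ is the least $n\in\mathbb N$ with $I^n=0$,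 or $\infty$ if none exists. *)

(* Defs.v *)
From mathcomp Require Import all_boot all_order all_algebra.
From Stdlib Require Import ClassicalEpsilon.
Set Implicit Arguments. Unset Strict Implicit. Unset Printing Implicit Defensive.
Import GRing.Theory.
Local Open Scope ring_scope.

Inductive enat := NInf | Fin of nat | PInf.

Definition ele (x y : enat) : Prop :=
  match x, y with
  | NInf, _ => True
  | _, PInf => True
  | Fin m, Fin n => (m <= n)%N
  | _, _ => False
  end.

Definition esup (S : enat -> Prop) : enat :=
  epsilon (inhabits NInf)
    (fun u => (forall x, S x -> ele x u) /\ (forall v, (forall x, S x -> ele x v) -> ele u v)).

Definition least (P : nat -> Prop) : enat :=
  if excluded_middle_informative (exists n, P n)
  then Fin (epsilon (inhabits 0%N) (fun n => P n /\ forall m, P m -> (n <= m)%N))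
  else PInf.

Definition epred (x : enat) : enat :=
  match x with Fin n => Fin n.-1 | y => y end.

Definition Delta (A B : zmodType) (a : A) (f : A -> B) : A -> B :=
  fun x => f (x + a) - f x.

Definition fdeg (A B : zmodType) (f : A -> B) : enat :=
  if excluded_middle_informative (forall x, f x = 0) then NInf
  else least (fun n => forall s : seq A, size s = n.+1 ->
                 forall x, foldr (@Delta A B) f s x = 0).

Definition delta (A B : zmodType) : enat :=
  esup (fun d => exists f : A -> B, fdeg f = d).

Definition expB (B : zmodType) : enat :=
  least (fun n => (0 < n)%N /\ forall b : B, b *+ n = 0).
Definition eB (B : zmodType) : nat :=
  match expB B with Fin n => n | _ => 0%N end.

(* Group ring Z_e[A] (Z_0 = Z): an element is represented by a formal sum
   sum r_i [a_i] with integer coefficients, given as a list of pairs (r_i, a_i);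
   coefficients are read modulo e. *)
Definition gr (A : zmodType) := seq (int * A).

Definition coef (A : zmodType) (p : gr A) (x : A) : int :=
  \sum_(ra <- p | ra.2 == x) ra.1.

Definition gr_zero (e : nat) (A : zmodType) (p : gr A) : Prop :=
  forall x, (coef p x = 0 %[mod e%:Z])%Z.

Definition gr_mul (A : zmodType) (p q : gr A) : gr A :=
  [seq (ra.1 * sb.1, ra.2 + sb.2) | ra <- p, sb <- q].

Definition aug (A : zmodType) (p : gr A) : int := \sum_(ra <- p) ra.1.
Definition in_aug_ideal (e : nat) (A : zmodType) (p : gr A) : Prop :=
  (aug p = 0 %[mod e%:Z])%Z.

(* ipow e n p : p represents an element of I^n (I^0 = whole ring,
   I^(n+1) = additive subgroup generated by products x*y, x in I^n, y in I) *)
Inductive ipow (e : nat) (A : zmodType) : nat -> gr A -> Prop :=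
| ipow_0 p : ipow e 0 p
| ipow_nil n : ipow e n.+1 [::]
| ipow_add n p q : ipow e n.+1 p -> ipow e n.+1 q -> ipow e n.+1 (p ++ q)
| ipow_mul n p q : ipow e n p -> in_aug_ideal e q -> ipow e n.+1 (gr_mul p q).

Definition aug_pow_zero (e : nat) (A : zmodType) (n : nat) : Prop :=
  forall p : gr A, ipow e n p -> gr_zero e p.

Definition nu (e : nat) (A : zmodType) : enat := least (aug_pow_zero e A).

Definition nontrivial (G : zmodType) : Prop := exists x : G, x != 0.

(* Main.v *)
Require Import Defs.
From mathcomp Require Import all_boot all_order all_algebra.
From Stdlib Require Import Classical ClassicalEpsilon.
Set Implicit Arguments. Unset Strict Implicit. Unset Printing Implicit Defensive.
Import GRing.Theory.
Local Open Scope ring_scope.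

Lemma ex_min (P : nat -> Prop) k : P k -> exists n, P n /\ forall m, P m -> (n <= m)%N.
Proof.
elim/ltn_ind: k => k IH Pk.
case: (classic (exists m, (m < k)%N /\ P m)) => [[m [lt Pm]]|H].
  exact: IH Pm.
exists k; split => // m Pm; rewrite leqNgt; apply/negP => lt; apply: H; by exists m.
Qed.

Lemma least_spec (P : nat -> Prop) n : least P = Fin n -> P n /\ forall m, P m -> (n <= m)%N.
Proof.
rewrite /least; case: excluded_middle_informative => [[k Pk]|] // [<-].
apply epsilon_spec; exact: ex_min Pk.
Qed.

Lemma least_PInf (P : nat -> Prop) : least P = PInf <-> ~ exists n, P n.
Proof. rewrite /least; case: excluded_middle_informative => //. Qed.

Lemma least_not_NInf (P : nat -> Prop) : least P <> NInf.
Proof. rewrite /least; case: excluded_middle_informative => //. Qed.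

Lemma ele_trans x y z : ele x y -> ele y z -> ele x z.
Proof. case: x; case: y; case: z => //= a b c H1 H2; first [exact: leq_trans H2 H1 | exact: leq_trans H1 H2]. Qed.

Lemma ele_anti x y : ele x y -> ele y x -> x = y.
Proof.
case: x => [|m|]; case: y => [|n|] //= H1 H2 //.
congr Fin; apply/eqP; rewrite eqn_leq H1 H2 //.
Qed.

Lemma esup_eq (S : enat -> Prop) u : (forall x, S x -> ele x u) ->
  (forall v, (forall x, S x -> ele x v) -> ele u v) -> esup S = u.
Proof.
move=> H1 H2; rewrite /esup.
set P := fun u => _.
have [Hw1 Hw2] := epsilon_spec (inhabits NInf) P (ex_intro P u (conj H1 H2)).
apply: ele_anti; [exact: Hw2 | exact: H2].
Qed.

Definition act (A B : zmodType) (x : gr A) (g : A -> B) : A -> B :=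
  fun y => \sum_(ra <- x) g (y + ra.2) *~ ra.1.

Definition vanish (A B : zmodType) (f : A -> B) (k : nat) : Prop :=
  forall s : seq A, size s = k -> forall x, foldr (@Delta A B) f s x = 0.

Lemma act_mul2 (A B : zmodType) (p q : gr A) (g : A -> B) y :
  act (gr_mul p q) g y = \sum_(sb <- q) act p (fun z => g (z + sb.2)) y *~ sb.1.
Proof.
rewrite /act /gr_mul big_allpairs_dep /= exchange_big /=.
apply: eq_bigr => sb _; rewrite mulrz_suml; apply: eq_bigr => ra _ /=.
by rewrite addrA mulrzA.
Qed.

Definition dlt (A : zmodType) (a : A) : gr A := [:: (1%Z, a); ((-1)%Z, 0)].

Fixpoint xs (A : zmodType) (s : seq A) : gr A :=
  match s with [::] => [:: (1%Z, 0)] | a :: s' => gr_mul (xs s') (dlt a) end.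

Lemma foldr_act (A B : zmodType) (f : A -> B) s y :
  foldr (@Delta A B) f s y = act (xs s) f y.
Proof.
elim: s y => [|a s IH] y /=.
  by rewrite /act big_cons big_nil addr0 mulr1z addr0.
change (Delta a (foldr (@Delta A B) f s) y = act (gr_mul (xs s) (dlt a)) f y).
rewrite /Delta !IH act_mul2 !big_cons big_nil /= addr0 mulr1z.
have -> : act (xs s) (fun z => f (z + 0)) y = act (xs s) f y.
  by apply: eq_bigr => ra _; rewrite addr0.
rewrite mulrN1z; congr (_ - _).
by apply: eq_bigr => ra _; rewrite addrAC.
Qed.

Lemma xs_ipow (A : zmodType) e (s : seq A) : ipow e (size s) (xs s).
Proof.
elim: s => [|a s IH] /=; first exact: ipow_0.
apply: ipow_mul => //.
by rewrite /in_aug_ideal /aug !big_cons big_nil /= addrN.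
Qed.

Lemma sum_if_eq (A B : zmodType) (L : seq A) a (G : A -> B) :
  uniq L -> a \in L -> \sum_(b <- L) (if a == b then G b else 0) = G a.
Proof.
elim: L => [|c L IH] //= /andP [cL uL]; rewrite in_cons big_cons.
case: eqP => [->|ne] /=.
  rewrite big_seq big1 ?addr0 // => b bL; case: eqP => // eb.
  by rewrite eb bL in cL.
by move=> aL; rewrite add0r IH.
Qed.

Lemma act_coef (A B : zmodType) (x : gr A) (f : A -> B) y (L : seq A) :
  uniq L -> {subset map snd x <= L} ->
  act x f y = \sum_(a <- L) f (y + a) *~ coef x a.
Proof.
move=> uL; elim: x => [|[r a] x IH] sub.
  rewrite /act big_nil big1 // => b _; by rewrite /coef big_nil mulr0z.
rewrite /act big_cons /=.
have aL : a \in L by apply: sub; rewrite in_cons eqxx.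
rewrite -/(act x f y) IH; last by move=> z zx; apply: sub; rewrite in_cons zx orbT.
rewrite /coef.
under [X in _ = X]eq_bigr => b _ do rewrite big_cons /=.
have -> : \sum_(b <- L) f (y + b) *~ (if a == b then r + \sum_(ra <- x | ra.2 == b) ra.1
                               else \sum_(ra <- x | ra.2 == b) ra.1) =
    \sum_(b <- L) ((if a == b then f (y + b) *~ r else 0) +
                    f (y + b) *~ \sum_(ra <- x | ra.2 == b) ra.1).
  by apply: eq_bigr => b _; case: eqP => _; rewrite ?mulrzDr ?add0r.
by rewrite big_split /= sum_if_eq.
Qed.

Lemma eB_kill (B : zmodType) (b : B) : b *+ eB B = 0.
Proof.
rewrite /eB; case E: (expB B) => [|n|] //.
by have [[_ H] _] := least_spec E; apply: H.
Qed.

Lemma kill_mod (B : zmodType) (b : B) c : (c = 0 %[mod (eB B)%:Z])%Z -> b *~ c = 0.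
Proof.
move=> H; rewrite (divz_eq c (eB B)) H mod0z addr0 mulrzA -pmulrn; exact: eB_kill.
Qed.

Lemma exists_nonkill (B : zmodType) (c : int) :
  ~ (c = 0 %[mod (eB B)%:Z])%Z -> exists b : B, b *~ c != 0.
Proof.
move=> H; apply: NNPP => N.
have K : forall b : B, b *~ c = 0.
  by move=> b; apply: NNPP => ne; apply: N; exists b; apply/eqP.
clear N.
move: H; rewrite /eB; case E: (expB B) => [|n|] H.
- by move: E; rewrite /expB => /least_not_NInf.
- have [[n0 Hn] Hmin] := least_spec E.
  have nz : (n%:Z != 0) by rewrite -lt0n.
  have ge := modz_ge0 c nz.
  have Hm : (`|(c %% n)%Z|%N)%:Z = (c %% n)%Z by rewrite gez0_abs.
  have Hr : (c %% n)%Z = c - (c %/ n)%Z * n.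
    by apply/eqP; rewrite eq_sym subr_eq addrC -divz_eq.
  have kill : forall b : B, b *+ `|(c %% n)%Z|%N = 0.
    move=> b; rewrite pmulrn Hm Hr mulrzBr K mulrzA -pmulrn Hn subrr //.
  have pos : (0 < `|(c %% n)%Z|)%N.
    rewrite lt0n; apply/negP => /eqP e0; apply: H; rewrite mod0z.
    by rewrite -Hm e0.
  have lt : (`|(c %% n)%Z| < n)%N.
    by rewrite -ltz_nat Hm; apply: ltz_pmod; rewrite ltz_nat lt0n.
  have := Hmin _ (conj pos kill); by rewrite leqNgt lt.
- have /least_PInf : expB B = PInf by [].
  apply; move: H; rewrite modz0 mod0z; case: c K => k K H.
  + exists k; split; first by rewrite lt0n; apply/negP => /eqP k0; apply: H; rewrite k0.
    by move=> b; rewrite pmulrn; exact: K.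
  + exists k.+1; split => // b; apply/eqP; rewrite -oppr_eq0; apply/eqP.
    by have := K b; rewrite NegzE mulrNz -pmulrn.

Qed.

Lemma act_cat (A B : zmodType) (p q : gr A) (g : A -> B) y :
  act (p ++ q) g y = act p g y + act q g y.
Proof. by rewrite /act big_cat. Qed.

Lemma vanish_ipow (A B : zmodType) n (x : gr A) : ipow (eB B) n x ->
  forall g : A -> B, vanish g n -> forall y, act x g y = 0.
Proof.
elim => {n x}.
- move=> p g V y; rewrite /act big1 // => ra _.
  by have := V [::] erefl (y + ra.2); rewrite /= => ->; rewrite mul0rz.
- by move=> n g V y; rewrite /act big_nil.
- move=> n p q _ IHp _ IHq g V y.
  by rewrite act_cat IHp // IHq // addr0.
- move=> n p q _ IHp Hq g V y.
  rewrite act_mul2.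
  have sh : forall b, act p (fun z => g (z + b)) y = act p g y.
    move=> b; apply/eqP; rewrite -subr_eq0; apply/eqP.
    have <- : act p (Delta b g) y = 0.
      apply: IHp => s hs z.
      have -> : foldr (@Delta A B) (Delta b g) s z = foldr (@Delta A B) g (s ++ [:: b]) z
        by rewrite foldr_cat.
      by apply: V; rewrite size_cat hs addn1.
    rewrite /act -sumrB; apply: eq_bigr => ra _; by rewrite /Delta mulrzBl.
  under eq_bigr => sb _ do rewrite sh.
  rewrite -mulrz_sumr; exact: kill_mod.
Qed.

Lemma act_indic (A B : zmodType) (p : gr A) (a0 : A) (b : B) :
  act p (fun z => if z == a0 then b else 0) 0 = b *~ coef p a0.
Proof.
rewrite /act /coef; elim: p => [|[r a] p IH]; first by rewrite !big_nil mulr0z.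
rewrite !big_cons /= IH add0r; case: eqP => _; by rewrite ?mulrzDr ?mul0rz ?add0r.
Qed.

Lemma witness (A B : zmodType) n : ~ aug_pow_zero (eB B) A n ->
  exists (f : A -> B) s y, size s = n /\ foldr (@Delta A B) f s y != 0.
Proof.
move=> H.
have [p [ip nz]] : exists p : gr A, ipow (eB B) n p /\ ~ gr_zero (eB B) p.
  by apply: NNPP => N; apply: H => p ip; apply: NNPP => nz; apply: N; exists p.
have [a0 ca] : exists a0, ~ (coef p a0 = 0 %[mod (eB B)%:Z])%Z.
  by apply: NNPP => N; apply: nz => a; apply: NNPP => c; apply: N; exists a.
have [b hb] := exists_nonkill (B:=B) ca.
apply: NNPP => N; move/eqP: hb; apply; rewrite -(act_indic p a0 b).
apply: (vanish_ipow ip) => s hs z; apply: NNPP => ne; apply: N.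
by exists (fun z => if z == a0 then b else 0), s, z; split => //; apply/eqP.
Qed.

Lemma zero_foldr (A B : zmodType) (h : A -> B) s y :
  (forall x, h x = 0) -> foldr (@Delta A B) h s y = 0.
Proof.
move=> H; elim: s y => [|a s IH] y /=; first exact: H.
change (Delta a (foldr (@Delta A B) h s) y = 0).
by rewrite /Delta !IH subrr.
Qed.

Lemma vanish_mono (A B : zmodType) (f : A -> B) j k :
  vanish f j -> (j <= k)%N -> vanish f k.
Proof.
move=> V le s hs y; rewrite -[s in foldr _ _ s](cat_take_drop (k - j)) foldr_cat.
apply: zero_foldr => x; apply: V; by rewrite size_drop hs subKn.
Qed.

Lemma fdeg_le (A B : zmodType) (f : A -> B) k : vanish f k.+1 -> ele (fdeg f) (Fin k).
Proof.
move=> V; rewrite /fdeg; destruct (excluded_middle_informative _) as [z0|nz]; first by [].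
set P := fun n => _.
case E: (least P) => [|m|] //.
- by have [_ H] := least_spec E; exact: H.
- by move/least_PInf: E; apply; exists k.
Qed.

Lemma fdeg_ge (A B : zmodType) (f : A -> B) k s y :
  size s = k -> foldr (@Delta A B) f s y != 0 -> ele (Fin k) (fdeg f).
Proof.
move=> hs nz; rewrite /fdeg; destruct (excluded_middle_informative _) as [H|nz0].
  by move: nz; rewrite (zero_foldr _ _ H) eqxx.
set P := fun n => _.
case E: (least P) => [|m|] //.
- by move: E => /least_not_NInf.
- have [Pm _] := least_spec E; rewrite /=.
  rewrite leqNgt; apply/negP => lt.
  have V : vanish f k by apply: (vanish_mono (j := m.+1)) => //.
  by move: nz; rewrite (V s hs y) eqxx.
Qed.

Lemma apz_vanish (A B : zmodType) (f : A -> B) k :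
  aug_pow_zero (eB B) A k -> vanish f k.
Proof.
move=> H s hs y; rewrite foldr_act.
have := xs_ipow (eB B) s; rewrite hs => /H Z.
rewrite (act_coef _ _ (undup_uniq (map snd (xs s)))); last by move=> z; rewrite mem_undup.
rewrite big1 // => a _; apply: kill_mod; exact: Z.
Qed.

Lemma not_apz0 (A B : zmodType) : nontrivial B -> ~ aug_pow_zero (eB B) A 0.
Proof.
move=> [b nb] H.
have Z := H [:: (1%Z, 0)] (ipow_0 _ _) 0.
have : coef [:: (1%Z, (0 : A))] 0 = 1 by rewrite /coef big_cons /= eqxx big_nil addr0.
move=> c1; rewrite c1 in Z.
by move: nb; rewrite -(mulr1z b) (kill_mod b Z) eqxx.
Qed.

Lemma part1 (A B : zmodType) : nontrivial B -> delta A B = epred (nu (eB B) A).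
Proof.
move=> nB; rewrite /delta.
case E: (nu (eB B) A) => [|k|] /=.
- by move: E => /least_not_NInf.
- have [Hk Hmin] := least_spec E.
  have k0 : (0 < k)%N.
    by rewrite lt0n; apply/negP => /eqP k0; move: Hk; rewrite k0; exact: (@not_apz0 A B nB).
  apply: esup_eq.
  + move=> x [f <-]; apply: fdeg_le; rewrite prednK //; exact: apz_vanish.
  + move=> v Hv.
    have nk : ~ aug_pow_zero (eB B) A k.-1.
      move=> H; have := Hmin _ H; by rewrite leqNgt prednK ?leqnn // ltnS leqnn.
    have [f [s [y [hs nz]]]] := witness nk.
    apply: ele_trans (fdeg_ge hs nz) (Hv _ (ex_intro _ f erefl)).
- apply: esup_eq; first by case.
  move=> v Hv; case: v Hv => [|m|] Hv //.
  + have nk : ~ aug_pow_zero (eB B) A 0.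
      by move=> H; move/least_PInf: E; apply; exists 0%N.
    have [f [s [y [hs nz]]]] := witness nk.
    exact: ele_trans (fdeg_ge hs nz) (Hv _ (ex_intro _ f erefl)).
  + have nk : ~ aug_pow_zero (eB B) A m.+1.
      by move=> H; move/least_PInf: E; apply; exists m.+1.
    have [f [s [y [hs nz]]]] := witness nk.
    have := ele_trans (fdeg_ge hs nz) (Hv _ (ex_intro _ f erefl)).
    by rewrite /= ltnn.
Qed.

Theorem theorem4p1 (A B : zmodType) :
  nontrivial A -> nontrivial B ->
  [/\ delta A B = epred (nu (eB B) A),
      (delta A B <> PInf <-> exists n, aug_pow_zero (eB B) A n)
    & forall B' : zmodType, nontrivial B' -> expB B' = expB B -> delta A B' = delta A B].
Proof.
move=> nA nB; split.
- exact: part1.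
- rewrite part1 //; split.
  + move=> H; apply: NNPP => N; apply: H.
    by rewrite /nu (proj2 (least_PInf _) N).
  + move=> ex; rewrite /nu; case E: (least _) => [|k|] //.
    by move/least_PInf: E.
- move=> B' nB' eq; rewrite !part1 //.
  by rewrite /eB eq.
Qed.
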